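(* For all integers $Z\ge1$, $F\ge Z+1$, $\ell\ge1$ and $x\in\{0,1,\dots,\lceil\frac{Z+1}{F-Z}\rceil-1\}$, $$s\!\left(F,\ \ell\binom{F}{Z}-x,\ Z\right)=\frac{\ell\binom{F}{Z}(F-Z)}{Z+1}=\ell\binom{F}{Z+1},$$ and an RPDA$\left(F,\ell\binom{F}{Z}-x,Z\right)$ exists.
   Context: A placement delivery array $S$-PDA$(F,K,Z)$ is an $F\times K$ array $R=(r_{j,k})$, $1\le j\le F$, $1\le k\le K$, over a finite set $S$ such that: (1) each cell is either empty or contains an element of $S$; (2) each column contains exactly $Z$ empty cells; (3) each element of $S$ occurs at most once in each row and at most once in each column; (4) if two distinct nonempty cells satisfy $r_{j_1,k_1}=r_{j_2,k_2}=t\in S$, then the cells $r_{j_1,k_2}$ and $r_{j_2,k_1}$ are empty. For integers $F,K\ge1$, $0\le Z\le F$, define $s(F,K,Z)=\min\{|S| : \text{there exists an } S\text{-PDA}(F,K,Z)\}$. An RPDA$(F,K,Z)$ (restricted PDA) is an $S$-PDA$(F,K,Z)$ with $|S|=\left\lceil\frac{K(F-Z)}{Z+1}\right\rceil$. *)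

(* Defs.v *)
From mathcomp Require Import all_boot.
Set Implicit Arguments. Unset Strict Implicit. Unset Printing Implicit Defensive.

(* An F x K array over S: cell (j,k) is None (empty) or Some t with t in S. *)
Definition is_PDA (S : finType) (F K Z : nat) (R : 'I_F -> 'I_K -> option S) : Prop :=
  (forall k : 'I_K, #|[set j : 'I_F | R j k == None]| = Z) /\
  (forall (j : 'I_F) (k1 k2 : 'I_K) (t : S),
      R j k1 = Some t -> R j k2 = Some t -> k1 = k2) /\
  (forall (j1 j2 : 'I_F) (k : 'I_K) (t : S),
      R j1 k = Some t -> R j2 k = Some t -> j1 = j2) /\
  (forall (j1 j2 : 'I_F) (k1 k2 : 'I_K) (t : S),
      (j1, k1) <> (j2, k2) -> R j1 k1 = Some t -> R j2 k2 = Some t ->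
      R j1 k2 = None /\ R j2 k1 = None).

Definition PDA_exists (F K Z n : nat) : Prop :=
  exists (S : finType) (R : 'I_F -> 'I_K -> option S), #|S| = n /\ @is_PDA S F K Z R.

Definition s_is (F K Z n : nat) : Prop :=
  PDA_exists F K Z n /\
  (forall (S : finType) (R : 'I_F -> 'I_K -> option S), @is_PDA S F K Z R -> n <= #|S|).

Definition ceil_div (a b : nat) : nat := (a + b.-1) %/ b.

Definition RPDA_exists (F K Z : nat) : Prop :=
  PDA_exists F K Z (ceil_div (K * (F - Z)) Z.+1).

(* Main.v *)
Require Import Defs.
From mathcomp Require Import all_boot zify.

Notation Col F Z l := ('I_l * {T : {set 'I_F} | #|T| == Z})%type.
Notation Sym F Z l := ('I_l * {U : {set 'I_F} | #|U| == Z.+1})%type.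

Definition mkR F Z l (j : 'I_F) (c : Col F Z l) : option (Sym F Z l) :=
  if j \in val c.2 then None else
  match (insub (j |: val c.2) : option {U : {set 'I_F} | #|U| == Z.+1}) with
  | Some U => Some (c.1, U) | None => None end.
Arguments mkR {F Z l} j c.

Lemma mkR_None F Z l (j : 'I_F) (c : Col F Z l) : (mkR j c == None) = (j \in val c.2).
Proof.
rewrite /mkR; case: ifP => // hj; case: insubP => // hn.
by rewrite cardsU1 hj (eqP (valP c.2)) eqxx in hn.
Qed.

Lemma mkR_Some F Z l (j : 'I_F) (c : Col F Z l) (t : Sym F Z l) : mkR j c = Some t ->
  j \notin val c.2 /\ t.1 = c.1 /\ val t.2 = j |: val c.2.
Proof.
rewrite /mkR; case: ifP => // hj; case: insubP => // U _ eU [<-].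
by split; [apply/negbT | split].
Qed.

Lemma card_Sym F Z l : #|{: Sym F Z l}| = l * 'C(F, Z.+1).
Proof.
rewrite card_prod card_ord card_sig; congr (_ * _).
rewrite -[F in 'C(F, _)]card_ord -card_draws; apply: eq_card => U; by rewrite !inE.
Qed.

Lemma card_Col F Z l : #|{: Col F Z l}| = l * 'C(F, Z).
Proof.
rewrite card_prod card_ord card_sig; congr (_ * _).
rewrite -[F in 'C(F, _)]card_ord -card_draws; apply: eq_card => U; by rewrite !inE.
Qed.

Lemma construct F Z l K (c : 'I_K -> Col F Z l) : injective c ->
  @is_PDA (Sym F Z l) F K Z (fun j k => mkR j (c k)).
Proof.
move=> ic; split; [|split; [|split]].
- move=> k; apply/eqP; rewrite -[X in _ == X](eqP (valP (c k).2)); apply/eqP.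
  by apply: eq_card => j; rewrite inE mkR_None.
- move=> j k1 k2 t /mkR_Some [h1 [e1 f1]] /mkR_Some [h2 [e2 f2]].
  apply: ic; move: (c k1) (c k2) h1 e1 f1 h2 e2 f2 => [i1 T1] [i2 T2] /= h1 e1 f1 h2 e2 f2.
  congr pair; first by rewrite -e1 -e2.
  apply: val_inj => /=; have e : j |: val T1 = j |: val T2 by rewrite -f1 -f2.
  by move: (congr1 (fun A => A :\ j) e) => /=; rewrite !setU1K.
- move=> j1 j2 k t /mkR_Some [h1 [_ f1]] /mkR_Some [h2 [_ f2]].
  have : j1 \in j2 |: val (c k).2 by rewrite -f2 f1 setU11.
  rewrite in_setU1 => /orP [/eqP //|h]; by rewrite h in h1.
- move=> j1 j2 k1 k2 t ne /mkR_Some [h1 [e1 f1]] /mkR_Some [h2 [e2 f2]].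
  have [ej|nej] := eqVneq j1 j2.
    subst j2; exfalso; apply: ne; congr pair; apply: ic.
    move: (c k1) (c k2) h1 e1 f1 h2 e2 f2 => [i1 T1] [i2 T2] /= h1 e1 f1 h2 e2 f2.
    congr pair; first by rewrite -e1 -e2.
    apply: val_inj => /=; have e : j1 |: val T1 = j1 |: val T2 by rewrite -f1 -f2.
    by move: (congr1 (fun A => A :\ j1) e) => /=; rewrite !setU1K.
  have a1 : j1 \in j2 |: val (c k2).2 by rewrite -f2 f1 setU11.
  have a2 : j2 \in j1 |: val (c k1).2 by rewrite -f1 f2 setU11.
  move: a1 a2; rewrite !in_setU1 (negbTE nej) eq_sym (negbTE nej) /= => a1 a2.
  by split; apply/eqP; rewrite mkR_None.
Qed.
Lemma occ_bound (S : finType) F K Z (R : 'I_F -> 'I_K -> option S) (t : S) :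
  @is_PDA S F K Z R ->
  #|[set p : 'I_F * 'I_K | R p.1 p.2 == Some t]| <= Z.+1.
Proof.
move=> [H2 [Hrow [Hcol H4]]].
set occ := [set p : 'I_F * 'I_K | R p.1 p.2 == Some t].
have [/eqP->|/set0Pn [p0 hp0]] := boolP (occ == set0); first by rewrite cards0.
have inj : {in occ &, injective (fun p : 'I_F * 'I_K => p.1)}.
  move=> [j1 k1] [j2 k2]; rewrite !inE /= => /eqP e1 /eqP e2 ej.
  subst j2; by rewrite (Hrow _ _ _ _ e1 e2).
rewrite -(card_in_imset inj).
apply: leq_trans (_ : #|p0.1 |: [set j | R j p0.2 == None]| <= _).
  apply: subset_leq_card; apply/subsetP => j /imsetP [p hp ->].
  rewrite !inE.
  have [-> | ne] := eqVneq p p0; first by rewrite eqxx.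
  move: hp hp0; rewrite !inE => /eqP e1 /eqP e2.
  have ne' : (p.1, p.2) <> (p0.1, p0.2) by case: p ne {e1} => a b; case: p0 {e2} => c d /= /eqP.
  by case: (H4 _ _ _ _ _ ne' e1 e2) => -> _; rewrite orbT.
by rewrite cardsU1 H2; case: (_ \notin _).
Qed.

Lemma PDA_lower (S : finType) F K Z (R : 'I_F -> 'I_K -> option S) :
  Z <= F -> @is_PDA S F K Z R -> K * (F - Z) <= #|S| * Z.+1.
Proof.
move=> ZF HP; have HP' := HP; move: HP' => [H2 _].
have E1 : \sum_(k : 'I_K) \sum_(j : 'I_F) (R j k != None : nat) = K * (F - Z).
  have -> : K * (F - Z) = \sum_(k : 'I_K) (F - Z) by rewrite sum_nat_const card_ord.
  apply: eq_bigr => k _.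
  have := cardsC [set j | R j k == None]; rewrite H2 card_ord => e.
  have -> : F - Z = #|~: [set j | R j k == None]| by lia.
  rewrite -sum1_card [RHS]big_mkcond /=. apply: eq_bigr => j _.
  by rewrite !inE; case: (R j k).
have E2 : forall j k, (R j k != None : nat) = \sum_(t : S) (R j k == Some t : nat).
  move=> j k; case: (R j k) => [t0|]; last by rewrite big1.
  rewrite (bigD1 t0) //= eqxx big1 // => t ht.
  by case: eqP => // [[e]]; rewrite e eqxx in ht.
rewrite -E1.
under eq_bigr do under eq_bigr do rewrite E2.
rewrite exchange_big /=.
under eq_bigr do rewrite exchange_big /=.
rewrite exchange_big /=.
have -> : #|S| * Z.+1 = \sum_(t : S) Z.+1 by rewrite sum_nat_const.
apply: leq_sum => t _.
apply: leq_trans (@occ_bound S F K Z R t HP).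
apply: eq_leq.
rewrite pair_big /= -sum1_card [RHS]big_mkcond /=.
apply: eq_big => // p _; rewrite inE.
by case: (_ == _).
Qed.

Theorem mainTheorem10 (Z F l x : nat) :
  1 <= Z -> Z.+1 <= F -> 1 <= l ->
  x < ceil_div Z.+1 (F - Z) ->
  s_is F (l * 'C(F, Z) - x) Z (l * 'C(F, Z.+1)) /\
  l * 'C(F, Z) * (F - Z) = l * 'C(F, Z.+1) * Z.+1 /\
  RPDA_exists F (l * 'C(F, Z) - x) Z.
Proof.
move=> hZ hF hl hx.
have eq1 : l * 'C(F, Z) * (F - Z) = l * 'C(F, Z.+1) * Z.+1.
  rewrite -!mulnA; congr (l * _); by rewrite mulnC -mul_bin_down mul_bin_diag mulnC.
have hFZ : 0 < F - Z by lia.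
have hx' : x * (F - Z) < Z.+1.
  move: hx; rewrite /ceil_div leq_divRL // mulSn; move: (x * (F - Z)) => P; lia.
have CN : 0 < 'C(F, Z.+1) by rewrite bin_gt0.
set N := l * 'C(F, Z.+1) in eq1 *.
set C0 := l * 'C(F, Z) in eq1 *.
set P := x * (F - Z) in hx'.
have NZ : Z.+1 <= N * Z.+1 by rewrite leq_pmull // /N muln_gt0 hl.
have hxC : x <= C0.
  rewrite leqNgt; apply/negP => h.
  have : C0.+1 * (F - Z) <= P by rewrite leq_mul2r h orbT.
  rewrite mulSn; lia.
have eK : (C0 - x) * (F - Z) = N * Z.+1 - P by rewrite mulnBl eq1.
have lower : forall (S : finType) (R : 'I_F -> 'I_(C0 - x) -> option S),
    @is_PDA S F (C0 - x) Z R -> N <= #|S|.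
  move=> S R HP; have := @PDA_lower S F (C0 - x) Z R (ltnW hF) HP; rewrite eK => h.
  rewrite leqNgt; apply/negP => h2.
  have : #|S|.+1 * Z.+1 <= N * Z.+1 by rewrite leq_mul2r h2 orbT.
  rewrite mulSn; lia.
have ex : PDA_exists F (C0 - x) Z N.
  have hK : C0 - x <= #|{: Col F Z l}| by rewrite card_Col; lia.
  pose c := fun k : 'I_(C0 - x) => (enum_val (widen_ord hK k) : Col F Z l).
  have ic : injective c.
    by move=> k1 k2 /enum_val_inj /(congr1 val) /= /val_inj.
  exists ('I_l * {U : {set 'I_F} | #|U| == Z.+1})%type, (fun j k => mkR j (c k)).
  split; first by rewrite card_Sym.
  exact: construct ic.
split; first by split.
split; first by [].
rewrite /RPDA_exists /ceil_div eK /=.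
have -> : N * Z.+1 - P + Z = N * Z.+1 + (Z - P) by lia.
rewrite divnMDl // divn_small ?addn0 //; lia.
Qed.
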